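(* Fix an integer $J\ge 2$, a finite set $\mathcal{G}$ of group labels, and strictly decreasing positive weights $w_1>\cdots>w_J>0$. Let $(\mathbf{Y},\mathbf{G})$ be any random vector with $\mathbf{Y}=(\mathbf{Y}_1,\dots,\mathbf{Y}_J)\in\mathbb{R}^J$ integrable and $\mathbf{G}=(\mathbf{G}_1,\dots,\mathbf{G}_J)\in\mathcal{G}^J$, and suppose that for all $1\le a<b\le J$ and all $g\in\mathcal{G}^J$ with $P(\mathbf{G}=g)>0$, $$E[\mathbf{Y}_a-\mathbf{Y}_b\mid \mathbf{G}=g]\ge 0.$$ Then there exist a probability space carrying candidate features $X_1,\dots,X_J$, group statuses $G_1,\dots,G_J\in\mathcal{G}$ and integrable outcomes $Y_1,\dots,Y_J$, together with a ranking $j(\cdot)$ (a bijection of $\{1,\dots,J\}$ that is a measurable function of $\mathcal{I}=\{(X_k,G_k)\}_{k=1}^J$) such that (i) for almost every realization of $\mathcal{I}$, $j(\cdot)$ maximizes $E\left[\sum_{r=1}^J w_rY_{j(r)}\,\middle|\,\mathcal{I}\right]$ over all bijections of $\{1,\dots,J\}$, and (ii) the rank-ordered vector $\big((Y_{j(1)},\dots,Y_{j(J)}),(G_{j(1)},\dots,G_{j(J)})\big)$ has the same joint distribution as $(\mathbf{Y},\mathbf{G})$.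
   Context: Here $j(r)$ denotes the index of the candidate placed in rank $r$ (rank 1 is best). A Ranker choosing $j(\cdot)$ as in (i) is called unbiased. The statement says that the moment inequalities above are the only testable implication of unbiasedness for an Auditor who observes only rank-ordered outcomes and group statuses. *)

(* Defs.v *)
From HB Require Import structures.
From mathcomp Require Import all_boot all_order all_algebra all_fingroup.
From mathcomp Require Import all_classical all_reals all_analysis.
Set Implicit Arguments. Unset Strict Implicit. Unset Printing Implicit Defensive.
Import Order.TTheory GRing.Theory Num.Theory.
Import numFieldNormedType.Exports.
Local Open Scope classical_set_scope.
Local Open Scope ring_scope.

Definition cexp_event {d} {T : measurableType d} {R : realType}
  (P : probability T R) (Z : T -> R) (A : set T) : R :=
  fine (\int[P]_(x in A) (Z x)%:E)%E / fine (P A).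

Definition sigma_info {d} {T : measurableType d} {dX} {TX : measurableType dX}
  {Gr : finType} {J : nat} (X : 'I_J -> T -> TX) (G : 'I_J -> T -> Gr)
  : set (set T) :=
  <<s [set B | exists k A, measurable A /\ B = X k @^-1` A] `|`
      [set B | exists k x, B = G k @^-1` [set x]] >>.

Definition is_cond_exp {d} {T : measurableType d} {R : realType}
  (P : probability T R) (F : set (set T)) (Z H : T -> R) : Prop :=
  (forall B : set R, measurable B -> F (H @^-1` B)) /\
  P.-integrable setT (fun x => (H x)%:E) /\
  (forall A, F A -> (\int[P]_(x in A) (Z x)%:E = \int[P]_(x in A) (H x)%:E)%E).

Definition joint_sigma {R : realType} {Gr : finType} {J : nat}
  : set (set (('I_J -> R) * ('I_J -> Gr))) :=
  <<s [set B | exists k (A : set R), measurable A /\ B = [set p | A (p.1 k)]] `|`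
      [set B | exists k x, B = [set p | p.2 k = x]] >>.

Definition same_law {R : realType} {Gr : finType} {J : nat}
  {d} {T : measurableType d} (P : probability T R)
  (V : T -> ('I_J -> R) * ('I_J -> Gr))
  {d0} {T0 : measurableType d0} (P0 : probability T0 R)
  (V0 : T0 -> ('I_J -> R) * ('I_J -> Gr)) : Prop :=
  forall B, (@joint_sigma R Gr J) B ->
    P (V @^-1` B) = P0 (V0 @^-1` B).

(* Main.v *)
Require Import Defs.
From HB Require Import structures.
From mathcomp Require Import all_boot all_order all_algebra all_fingroup.
From mathcomp Require Import all_classical all_reals all_analysis.
Import Order.TTheory GRing.Theory Num.Theory.
Import numFieldNormedType.Exports.
Local Open Scope classical_set_scope.
Local Open Scope ring_scope.

Lemma rearr (R : realDomainType) (J : nat) (w m : 'I_J -> R) :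
  (forall r s : 'I_J, (r <= s)%N -> w s <= w r) -> (forall r, 0 <= w r) ->
  (forall a b : 'I_J, (a <= b)%N -> m b <= m a) ->
  forall s : {perm 'I_J}, \sum_r w r * m (s r) <= \sum_r w r * m r.
Proof.
case: J w m => [|n] w m hw hw0 hm s; first by rewrite !big_ord0.
pose W := fun i : nat => if (i < n.+1)%N then w (inord i) else 0.
pose D := fun l : 'I_n.+1 => W l - W l.+1.
have wE : forall r : 'I_n.+1, w r = \sum_(l < n.+1 | (r <= l)%N) D l.
  move=> r; rewrite /D.
  have -> : \sum_(l < n.+1 | (r <= l)%N) (W l - W l.+1)
          = \sum_(r <= l < n.+1) (W l - W l.+1).
    by rewrite big_geq_mkord; apply: eq_bigl => l.
  have -> : \sum_(r <= l < n.+1) (W l - W l.+1)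
     = - \sum_(r <= l < n.+1) (W l.+1 - W l).
    by rewrite -sumrN; apply: eq_bigr => l _; rewrite opprB.
  rewrite (telescope_sumr (fun k => W k) (ltnW (ltn_ord r))) opprB /W ltnn subr0.
  by rewrite ltn_ord inord_val.
have abel : forall x : 'I_n.+1 -> R, \sum_r w r * x r
    = \sum_(l < n.+1) D l * \sum_(r < n.+1 | (r <= l)%N) x r.
  move=> x.
  have -> : \sum_r w r * x r = \sum_(r < n.+1) \sum_(l < n.+1) (if (r <= l)%N then D l * x r else 0).
    apply: eq_bigr => r _; rewrite wE mulr_suml big_mkcond /=.
    by apply: eq_bigr => l _; case: ifP; rewrite ?mul0r.
  rewrite exchange_big /=; apply: eq_bigr => l _.
  rewrite mulr_sumr [RHS]big_mkcond /=.
  apply: eq_bigr => i _; by case: ifP; rewrite ?mulr0.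
have D0 : forall l, 0 <= D l.
  move=> l; rewrite /D /W ltn_ord inord_val.
  case: ifP => hl; last by rewrite subr0.
  rewrite subr_ge0; apply: hw; by rewrite inordK.
rewrite !abel; apply: ler_sum => l _; apply: ler_wpM2l => //.
pose c := m l.
suff key : \sum_(r < n.+1 | (r <= l)%N) (m (s r) - c)
        <= \sum_(r < n.+1 | (r <= l)%N) (m r - c).
  by rewrite !sumrB lerD2r in key.
have -> : \sum_(r < n.+1 | (r <= l)%N) (m (s r) - c)
     = \sum_(i < n.+1) (if ((s^-1)%g i <= l)%N then m i - c else 0).
  rewrite big_mkcond [RHS](reindex_inj (@perm_inj _ s)) /=.
  by apply: eq_bigr => r _; rewrite permK.
rewrite [X in _ <= X]big_mkcond /=; apply: ler_sum => i _.
case: ifP => h1; case: ifP => h2 //.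
- rewrite subr_le0; apply: hm; apply: ltnW; by rewrite ltnNge h2.
- rewrite subr_ge0; exact: hm.
Qed.

Theorem proposition2 (R : realType) (J : nat) (Gr : finType)
  (w : 'I_J -> R)
  (d0 : measure_display) (T0 : measurableType d0) (P0 : probability T0 R)
  (Y0 : 'I_J -> T0 -> R) (G0 : 'I_J -> T0 -> Gr) :
  (2 <= J)%N ->
  (forall r s : 'I_J, (r < s)%N -> w s < w r) ->
  (forall r, 0 < w r) ->
  (forall k, P0.-integrable setT (fun x => (Y0 k x)%:E)) ->
  (forall k x, measurable (G0 k @^-1` [set x])) ->
  (forall (a b : 'I_J) (g : 'I_J -> Gr), (a < b)%N ->
     (0 < P0 [set t | G0^~ t = g])%E ->
     0 <= cexp_event P0 (fun t => Y0 a t - Y0 b t) [set t | G0^~ t = g]) ->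
  exists (d : measure_display) (T : measurableType d) (P : probability T R)
    (dX : measure_display) (TX : measurableType dX)
    (X : 'I_J -> T -> TX) (G : 'I_J -> T -> Gr) (Y : 'I_J -> T -> R)
    (j : T -> {perm 'I_J}),
    (forall k, measurable_fun setT (X k)) /\
        (forall k x, measurable (G k @^-1` [set x])) /\
        (forall k, P.-integrable setT (fun t => (Y k t)%:E)) /\
        (* j is a measurable function of I = {(X_k, G_k)}_k *)
        (forall tau : {perm 'I_J}, sigma_info X G [set t | j t = tau]) /\
        (* (i) j maximizes E[sum_r w_r Y_{j(r)} | I] over all bijections, a.s. *)
        (forall (H : T -> R) (h : {perm 'I_J} -> T -> R),
           is_cond_exp P (sigma_info X G)
             (fun t => \sum_(r < J) w r * Y (j t r) t) H ->
           (forall sigma : {perm 'I_J},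
              is_cond_exp P (sigma_info X G)
                (fun t => \sum_(r < J) w r * Y (sigma r) t) (h sigma)) ->
           {ae P, forall t, forall sigma : {perm 'I_J}, h sigma t <= H t}) /\
        (* (ii) the rank-ordered vector has the law of (Y0, G0) *)
        same_law P (fun t => ((fun r => Y (j t r) t), (fun r => G (j t r) t)))
                 P0 (fun t => ((fun k => Y0 k t), (fun k => G0 k t))).
Proof.
move=> J2 hw hw0 hY hG hmono.
pose X := fun (k : 'I_J) (_ : T0) => (0 : R).
pose atom := fun g : 'I_J -> Gr => [set t | G0^~ t = g].
have atomE : forall g, atom g = \bigcap_(k in [set: 'I_J]) (G0 k @^-1` [set g k]).
  move=> g; apply/seteqP; split => t /=.
    by move=> <- k _.
  by move=> h; apply/funext => k; exact: h.
have atomM : forall g, measurable (atom g).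
  move=> g; rewrite atomE; apply: fin_bigcap_measurable; first exact: finite_finset.
  by move=> k _; exact: hG.
have sat : forall A, sigma_info X G0 A -> forall t t', G0^~ t = G0^~ t' -> A t -> A t'.
  pose S := [set A : set T0 | forall t t', G0^~ t = G0^~ t' -> A t -> A t'].
  suff : sigma_info X G0 `<=` S by move=> FS A /FS.
  apply: smallest_sub.
    split.
    - by move=> t t' _ [].
    - move=> A SA t t' e; rewrite /setD /=; move=> [_ nAt]; split => // At'; apply: nAt; exact: (SA t' t (esym e)).
    - move=> A SA t t' e [n _ Ant]; exists n => //; exact: (SA n t t' e).
  move=> B [[k [A [_ ->]]]|[k [x ->]]] t t' e /=.
    by [].
  by move=> <-; rewrite -[G0 k t']/(G0^~ t' k) -e.
have Fatom : forall g, sigma_info X G0 (atom g).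
  move=> g; rewrite atomE.
  apply: (fin_bigcap_measurable (T := g_sigma_algebraType _)); first exact: finite_finset.
  move=> k _; apply: (sub_smallest (@subset_refl _ _)); right; by exists k, (g k).
have intA : forall g k, P0.-integrable (atom g) (fun x => (Y0 k x)%:E).
  by move=> g k; apply: (integrableS measurableT (atomM g) (@subsetT _ _) (hY k)).
pose I := fun (g : 'I_J -> Gr) (k : 'I_J) => fine (\int[P0]_(x in atom g) (Y0 k x)%:E).
have IE : forall g k, ((I g k)%:E = \int[P0]_(x in atom g) (Y0 k x)%:E)%E.
  by move=> g k; rewrite fineK //; apply: integrable_fin_num => //; exact: atomM.
have val : forall (s : {perm 'I_J}) (K : T0 -> R),
    is_cond_exp P0 (sigma_info X G0) (fun t => \sum_(r < J) w r * Y0 (s r) t) K ->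
    forall t, ((K t) * fine (P0 (atom (G0^~ t))))%:E
              = (\sum_(r < J) w r * I (G0^~ t) (s r))%:E.
  move=> s K [mK [iK eK]] t.
  set g := G0^~ t.
  have Kc : forall x, atom g x -> K x = K t.
    move=> x ax.
    exact: (sat (K @^-1` [set K t]) (mK _ (measurable_set1 (K t))) t x (esym ax) erefl).
  rewrite EFinM fineK; last by apply: fin_num_measure; exact: atomM.
  rewrite -integral_cst; last exact: atomM.
  have -> : (\int[P0]_(x in atom g) cst (K t)%:E x = \int[P0]_(x in atom g) (K x)%:E)%E.
    by apply: eq_integral => x /[!inE] ax; rewrite /= Kc.
  rewrite -eK; last exact: Fatom.
  rewrite -sumEFin.
  under eq_integral => x _ do rewrite -sumEFin.
  rewrite integral_sum //; first last.
    by move=> r; under eq_fun do rewrite EFinM; exact: integrableZl.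
  apply: eq_bigr => r _; rewrite EFinM IE.
  under eq_integral => x _ do rewrite EFinM.
  by rewrite integralZl //; exact: atomM.
exists d0, T0, P0, _, R, X, G0, Y0, (fun _ => 1%g).
split; first by move=> k; exact: measurable_cst.
split; first exact: hG.
split; first exact: hY.
split.
  move=> tau; have [->|ne] := eqVneq tau 1%g.
    have -> : [set t : T0 | (1%g : {perm 'I_J}) = 1%g] = setT by apply/seteqP; split.
    exact: (@measurableT _ (g_sigma_algebraType _)).
  have -> : [set t : T0 | (1%g : {perm 'I_J}) = tau] = set0.
    by apply/seteqP; split => // t /= e; move: ne; rewrite -e eqxx.
  exact: (@measurable0 _ (g_sigma_algebraType _)).
split; last first.
  have -> : (fun t => ((fun r => Y0 ((1%g : {perm 'I_J}) r) t),
                       (fun r => G0 ((1%g : {perm 'I_J}) r) t)))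
          = (fun t => ((fun k => Y0 k t), (fun k => G0 k t))).
    by apply/funext => t; congr pair; apply/funext => r; rewrite perm1.
  by [].
move=> H h cH ch.
pose N := \big[setU/set0]_(f <- enum {ffun 'I_J -> Gr} | P0 (atom f) == 0%E) atom f.
have negN : P0.-negligible N.
  apply: (big_ind (fun A => P0.-negligible A)).
  - exact: negligible_set0.
  - by move=> A B; exact: negligibleU.
  - move=> f /eqP hf; apply/negligibleP => //; exact: atomM.
apply: (negligibleS _ negN) => t /= nQ.
pose f := [ffun k => G0 k t].
have fE : (f : 'I_J -> Gr) = G0^~ t by apply/funext => k; rewrite ffunE.
rewrite /N -bigcup_seq_cond.
have [hp|hp] := eqVneq (P0 (atom (G0^~ t))) 0%E.
  by exists f; [rewrite /= mem_enum fE hp eqxx | rewrite /= fE].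
exfalso; apply: nQ => s.
set g := G0^~ t in hp *.
have ppos : (0 < P0 (atom g))%E by rewrite lt0e hp measure_ge0.
have qpos : 0 < fine (P0 (atom g)).
  apply: fine_gt0; rewrite ppos /= -ge0_fin_numE ?measure_ge0 //; apply: fin_num_measure; exact: atomM.
have [v1] := val s (h s) (ch s) t.
have [v2] := val 1%g H cH t.
rewrite -(ler_pM2r qpos) v1 v2.
rewrite [X in _ <= X](eq_bigr (fun r => w r * I g r)); last by move=> r _; rewrite perm1.
apply: rearr.
- move=> a b; rewrite leq_eqVlt => /orP[/eqP eab|lab].
    by rewrite (val_inj eab).
  exact/ltW/hw.
- by move=> r; exact/ltW.
- move=> a b; rewrite leq_eqVlt => /orP[/eqP eab|lab].
    by rewrite (val_inj eab).
  have := hmono a b g lab ppos.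
  rewrite /cexp_event.
  have -> : (\int[P0]_(x in [set t | G0^~ t = g]) (Y0 a x - Y0 b x)%:E
            = (I g a - I g b)%:E)%E.
    under eq_integral => x _ do rewrite EFinB.
    by rewrite integralB_EFin //; [rewrite -!IE | exact: atomM | exact: intA | exact: intA].
  rewrite /= => h0.
  have := mulr_ge0 h0 (ltW qpos); rewrite divfK ?gt_eqF // subr_ge0.
  by [].
Qed.
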